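(* Let $(\mathfrak g,[\cdot,\cdot]_{\mathfrak g},E)$ be an ENL algebra and $r\in\mathfrak g\otimes\mathfrak g$ skew-symmetric. Define $r_+:\mathfrak g^*\to\mathfrak g$ by $\langle\eta,r_+(\xi)\rangle=\langle\xi\otimes\eta,r\rangle$. Then $r_+$ is an ENE-relative Rota–Baxter operator on $(\mathfrak g,[\cdot,\cdot]_{\mathfrak g},E)$ with respect to the coadjoint ENE-representation $(\mathfrak g^*;E^*,\mathrm{ad}^* )$ if and only if $r$ is an EN $r$-matrix, i.e. $[\![r,r]\!]=0$ and $(\mathrm{Id}\otimes E-E\otimes\mathrm{Id})(r)=0$.
   Context: Vector spaces are finite-dimensional over an algebraically closed field of characteristic zero. An ENL algebra is a Lie algebra with linear $E$ satisfying $E[x,y]=[x,Ey]$ for all $x,y$. Coadjoint ENE-representation: $\langle\mathrm{ad}^*_x\xi,y\rangle=-\langle\xi,[x,y]_{\mathfrak g}\rangle$ and $E^*$ the dual map of $E$. An ENE-relative Rota–Baxter operator with respect to an ENE-representation $(W;T,\rho)$ is a linear $K:W\to\mathfrak g$ with $[Ku,Kv]_{\mathfrak g}=K(\rho(Ku)v-\rho(Kv)u)$ for all $u,v$ and $E\circ K=K\circ T$. For $r=\sum a_i\otimes b_i$, $[\![r,r]\!]=[r_{12},r_{13}]+[r_{13},r_{23}]+[r_{12},r_{23}]$ in $U(\mathfrak g)^{\otimes3}$ with $r_{12}=\sum a_i\otimes b_i\otimes1$, $r_{13}=\sum a_i\otimes1\otimes b_i$, $r_{23}=\sum1\otimes a_i\otimes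 b_i$. *)

(* Defs.v *)
(* Coordinates: g = F^n (row vectors 'rV[F]_n), g^* = F^n with
   the standard pairing; tensors in g (x) g are n x n coefficient matrices,
   tensors in g (x) g (x) g are functions 'I_n -> 'I_n -> 'I_n -> F. *)
From HB Require Import structures.
From mathcomp Require Import all_boot all_order all_algebra.
Set Implicit Arguments. Unset Strict Implicit. Unset Printing Implicit Defensive.
Import Order.TTheory GRing.Theory Num.Theory.
Local Open Scope ring_scope.

Section Defs.
Variables (F : fieldType) (n : nat).
Notation V := 'rV[F]_n.

Definition ebas (i : 'I_n) : V := delta_mx 0 i.

Definition pair (xi x : V) : F := \sum_(i < n) xi 0 i * x 0 i.

Definition dualmap (f : V -> V) (xi : V) : V := \row_j pair xi (f (ebas j)).

Definition is_lie_bracket (br : V -> V -> V) : Prop :=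
  [/\ (forall (a : F) (x y z : V), br (a *: x + y) z = a *: br x z + br y z),
      (forall x y : V, br x y = - br y x)
    & (forall x y z : V, br x (br y z) + br y (br z x) + br z (br x y) = 0)].

Definition linop (E : 'M[F]_n) (x : V) : V := x *m E.

Definition is_ENL (br : V -> V -> V) (E : 'M[F]_n) : Prop :=
  is_lie_bracket br /\ forall x y : V, linop E (br x y) = br x (linop E y).

Definition coad (br : V -> V -> V) (x : V) (xi : V) : V :=
  - dualmap (br x) xi.

Definition is_ENE_RB (br : V -> V -> V) (E : 'M[F]_n)
  (T : V -> V) (rho : V -> V -> V) (K : V -> V) : Prop :=
  (forall u v : V, br (K u) (K v) = K (rho (K u) v - rho (K v) u)) /\
  (forall u : V, linop E (K u) = K (T u)).

Definition tens (u v : V) : 'M[F]_n := \matrix_(i, j) (u 0 i * v 0 j).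

Definition tmap (f g : V -> V) (r : 'M[F]_n) : 'M[F]_n :=
  \sum_(i < n) \sum_(j < n) r i j *: tens (f (ebas i)) (g (ebas j)).

Definition skew_tensor (r : 'M[F]_n) : Prop := r^T = - r.

(* r_+ : g^* -> g,  <eta, r_+ xi> = <xi (x) eta, r> = sum_ij xi_i eta_j r_ij *)
Definition rplus (r : 'M[F]_n) (xi : V) : V := xi *m r.

Definition tens3 (u v w : V) (i j k : 'I_n) : F := u 0 i * v 0 j * w 0 k.

(* [[r,r]] = [r12,r13] + [r13,r23] + [r12,r23] for r = sum r_pq e_p (x) e_q *)
Definition CYB (br : V -> V -> V) (r : 'M[F]_n) (i j k : 'I_n) : F :=
  \sum_(p < n) \sum_(q < n) \sum_(s < n) \sum_(t < n)
    r p q * r s t *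
    (tens3 (br (ebas p) (ebas s)) (ebas q) (ebas t) i j k
     + tens3 (ebas p) (ebas s) (br (ebas q) (ebas t)) i j k
     + tens3 (ebas p) (br (ebas q) (ebas s)) (ebas t) i j k).

Definition is_EN_rmatrix (br : V -> V -> V) (E : 'M[F]_n) (r : 'M[F]_n) : Prop :=
  (forall i j k : 'I_n, CYB br r i j k = 0) /\
  tmap id (linop E) r - tmap (linop E) id r = 0.

End Defs.

(* Main.v *)
Require Import Defs.
From HB Require Import structures.
From mathcomp Require Import all_boot all_order all_algebra.
From mathcomp Require Import ring.
Import Order.TTheory GRing.Theory Num.Theory.
Local Open Scope ring_scope.

Section Gen.
Variables (F : fieldType) (n : nat) (B : 'rV[F]_n -> 'rV[F]_n -> 'rV[F]_n).
Hypothesis L : forall (a : F) (x y z : 'rV[F]_n), B (a *: x + y) z = a *: B x z + B y z.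
Hypothesis S : forall x y : 'rV[F]_n, B x y = - B y x.

Lemma B0l z : B 0 z = 0.
Proof. have := L (-1) 0 0 z. by rewrite scaler0 addr0 scaleN1r addNr. Qed.

Lemma BDl x y z : B (x + y) z = B x z + B y z.
Proof. by have := L 1 x y z; rewrite !scale1r. Qed.

Lemma BZl a x z : B (a *: x) z = a *: B x z.
Proof. by have := L a x 0 z; rewrite addr0 B0l addr0. Qed.

Lemma B_suml (I : Type) (s : seq I) (f : I -> 'rV[F]_n) z :
  B (\sum_(i <- s) f i) z = \sum_(i <- s) B (f i) z.
Proof.
apply: (big_rec2 (fun a b => B a z = b)); first exact: B0l.
by move=> i a b _ <-; rewrite BDl.
Qed.

Lemma BL x z : B x z = \sum_(a < n) x 0 a *: B (ebas F a) z.
Proof.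
rewrite {1}(row_sum_delta x) B_suml; apply: eq_bigr => i _.
by rewrite BZl.
Qed.

Lemma BE x y c : B x y 0 c = \sum_(a < n) \sum_(b < n) x 0 a * y 0 b * B (ebas F a) (ebas F b) 0 c.
Proof.
rewrite BL summxE; apply: eq_bigr => a _.
rewrite mxE S BL mxE summxE -sumrN big_distrr /=; apply: eq_bigr => b _.
by rewrite !mxE S mxE !mulrN opprK mulrA.
Qed.
End Gen.

Section H.
Variables (F : fieldType) (n : nat).

Lemma ebasE (i a : 'I_n) : ebas F i 0 a = (a == i)%:R.
Proof. by rewrite /ebas mxE eqxx. Qed.

Lemma sumdelta (f : 'I_n -> F) i : \sum_(a < n) (a == i)%:R * f a = f i.
Proof.
rewrite (bigD1 i) //= eqxx mul1r big1 ?addr0 // => a /negbTE ->.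
by rewrite mul0r.
Qed.

Lemma ebas_mul (A : 'M[F]_n) a b : (ebas F a *m A) 0 b = A a b.
Proof.
rewrite mxE; under eq_bigr => m _ do rewrite ebasE.
exact: sumdelta.
Qed.

Lemma mx_ext (A B : 'M[F]_n) : (forall u : 'rV[F]_n, u *m A = u *m B) -> A = B.
Proof.
move=> H; apply/matrixP => a b.
by rewrite -!ebas_mul H.
Qed.

Lemma dualE (E : 'M[F]_n) u : dualmap (linop E) u = u *m E^T.
Proof.
apply/rowP => j; rewrite !mxE /pair; apply: eq_bigr => k _.
by rewrite /linop ebas_mul mxE.
Qed.

Lemma tmap1E (E : 'M[F]_n) r : tmap id (linop E) r = r *m E.
Proof.
apply/matrixP => a b; rewrite /tmap summxE.
under eq_bigr => i _ do rewrite summxE.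
rewrite (bigD1 a) //= [X in _ + X]big1 ?addr0; last first.
  move=> i; rewrite eq_sym => /negbTE Hi; rewrite big1 // => j _.
  by rewrite /tens mxE mxE /linop ebas_mul ebasE Hi mul0r mulr0.
rewrite mxE; apply: eq_bigr => j _.
by rewrite /tens mxE mxE /linop ebas_mul ebasE eqxx mul1r.
Qed.

Lemma tmap2E (E : 'M[F]_n) r : tmap (linop E) id r = E^T *m r.
Proof.
apply/matrixP => a b; rewrite /tmap summxE mxE; apply: eq_bigr => i _.
rewrite summxE.
rewrite (bigD1 b) //= big1 ?addr0; last first.
  by move=> j; rewrite eq_sym => /negbTE Hj; rewrite /tens mxE mxE /linop ebas_mul ebasE Hj !mulr0.
by rewrite /tens mxE mxE /linop ebas_mul ebasE eqxx mulr1 mxE mulrC.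
Qed.
End H.

Section M.
Variables (F : fieldType) (n : nat) (br : 'rV[F]_n -> 'rV[F]_n -> 'rV[F]_n) (r : 'M[F]_n).
Hypothesis Hl : is_lie_bracket br.
Hypothesis Hr : skew_tensor r.

Let brL1 : forall (a : F) (x y z : 'rV[F]_n), br (a *: x + y) z = a *: br x z + br y z.
Proof. by case: Hl. Qed.
Let brS : forall x y : 'rV[F]_n, br x y = - br y x.
Proof. by case: Hl. Qed.

Definition C a b c := br (ebas F a) (ebas F b) 0 c.

Lemma rskew a b : r a b = - r b a.
Proof. have := congr1 (fun M : 'M[F]_n => M b a) (Hr : r^T = - r). by rewrite !mxE => ->. Qed.

Lemma sum_at (G : 'I_n -> F) i : (forall p, (i == p) = false -> G p = 0) -> \sum_p G p = G i.
Proof.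
move=> H; rewrite (bigD1 i) //= big1 ?addr0 // => p Hp; apply: H.
by rewrite eq_sym (negbTE Hp).
Qed.

Definition T1 i j c := \sum_(p < n) \sum_(s < n) r p j * r s c * C p s i.
Definition T2 i j c := \sum_(q < n) \sum_(t < n) r i q * r j t * C q t c.
Definition T3 i j c := \sum_(q < n) \sum_(s < n) r i q * r s c * C q s j.

Lemma CYB_simpl i j k : CYB br r i j k = T1 i j k + T2 i j k + T3 i j k.
Proof.
have -> : CYB br r i j k =
  \sum_(p < n) \sum_(q < n) \sum_(s < n) \sum_(t < n) r p q * r s t * (C p s i * (j == q)%:R * (k == t)%:R)
+ \sum_(p < n) \sum_(q < n) \sum_(s < n) \sum_(t < n) r p q * r s t * ((i == p)%:R * (j == s)%:R * C q t k)
+ \sum_(p < n) \sum_(q < n) \sum_(s < n) \sum_(t < n) r p q * r s t * ((i == p)%:R * C q s j * (k == t)%:R).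
  rewrite /CYB -!big_split; apply: eq_bigr => p _.
  rewrite -!big_split; apply: eq_bigr => q _.
  rewrite -!big_split; apply: eq_bigr => s _.
  rewrite -!big_split; apply: eq_bigr => t _.
  by rewrite /tens3 !ebasE /C !mulrDr.
congr (_ + _ + _); rewrite ?/T1 ?/T2 ?/T3.
- apply: eq_bigr => p _.
  rewrite (@sum_at _ j); last first.
    move=> q Hq; rewrite big1 // => s _; rewrite big1 // => t _.
    by rewrite Hq !(mulr0, mul0r).
  apply: eq_bigr => s _.
  rewrite (@sum_at _ k); last first.
    by move=> t Ht; rewrite Ht !(mulr0, mul0r).
  by rewrite !eqxx !mulr1.
- rewrite (@sum_at _ i); last first.
    move=> p Hp; rewrite big1 // => q _; rewrite big1 // => s _; rewrite big1 // => t _.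
    by rewrite Hp !(mulr0, mul0r).
  apply: eq_bigr => q _.
  rewrite (@sum_at _ j); last first.
    move=> s Hs; rewrite big1 // => t _.
    by rewrite Hs !(mulr0, mul0r).
  apply: eq_bigr => t _.
  by rewrite !eqxx !mul1r ?mulr1.
- rewrite (@sum_at _ i); last first.
    move=> p Hp; rewrite big1 // => q _; rewrite big1 // => s _; rewrite big1 // => t _.
    by rewrite Hp !(mulr0, mul0r).
  apply: eq_bigr => q _; apply: eq_bigr => s _.
  rewrite (@sum_at _ k); last first.
    by move=> t Ht; rewrite Ht !(mulr0, mul0r).
  by rewrite !eqxx !mul1r ?mulr1.
Qed.

Lemma brEm x m j : br x (ebas F m) 0 j = \sum_(a < n) x 0 a * C a m j.
Proof.
rewrite (@BL _ _ _ brL1) summxE; apply: eq_bigr => a _.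
by rewrite mxE.
Qed.

Lemma brEm' k m j : br (ebas F k *m r) (ebas F m) 0 j = \sum_(a < n) r k a * C a m j.
Proof. by rewrite brEm; apply: eq_bigr => a _; rewrite ebas_mul. Qed.

Lemma coadE x j m : coad br x (ebas F j) 0 m = - br x (ebas F m) 0 j.
Proof.
rewrite /coad /dualmap mxE mxE /pair.
under eq_bigr do rewrite ebasE.
by rewrite sumdelta.
Qed.

Lemma L3 i j c : \sum_(m < n) (\sum_(a < n) r i a * C a m j) * r m c = T3 i j c.
Proof.
rewrite /T3.
under eq_bigr => m _ do rewrite big_distrl.
rewrite exchange_big; apply: eq_bigr => q _; apply: eq_bigr => s _.
by rewrite /=; ring.
Qed.

Lemma L1 i j c : \sum_(m < n) (\sum_(a < n) r j a * C a m i) * r m c = - T1 i j c.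
Proof.
rewrite /T1 -sumrN.
under eq_bigr => m _ do rewrite big_distrl.
rewrite exchange_big; apply: eq_bigr => p _.
rewrite -sumrN; apply: eq_bigr => s _.
by rewrite /= (rskew j p); ring.
Qed.

Definition Dm u v := br (rplus r u) (rplus r v)
  - rplus r (coad br (rplus r u) v - coad br (rplus r v) u).

Lemma Dei i j c : Dm (ebas F i) (ebas F j) 0 c = CYB br r i j c.
Proof.
rewrite CYB_simpl /Dm mxE mxE (@BE _ _ _ brL1 brS).
have -> : \sum_(a < n) \sum_(b < n) rplus r (ebas F i) 0 a * rplus r (ebas F j) 0 b *
      br (ebas F a) (ebas F b) 0 c = T2 i j c.
  apply: eq_bigr => a _; apply: eq_bigr => b _.
  by rewrite /rplus !ebas_mul.
rewrite /rplus mxE.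
have -> : \sum_(m < n) (coad br (ebas F i *m r) (ebas F j) - coad br (ebas F j *m r) (ebas F i)) 0 m * r m c
   = - T3 i j c - T1 i j c.
  rewrite -L1 -L3 -sumrN -big_split /=; apply: eq_bigr => m _.
  rewrite mxE [X in (_ + X) * _]mxE !coadE !brEm'.
  ring.
ring.
Qed.

Lemma brL2 a x y z : br x (a *: y + z) = a *: br x y + br x z.
Proof. by rewrite brS brL1 (brS y) (brS z) scalerN opprD !opprK. Qed.

Lemma pairL2 (xi x y : 'rV[F]_n) a : pair xi (a *: x + y) = a * pair xi x + pair xi y.
Proof.
rewrite /pair big_distrr -big_split; apply: eq_bigr => k _ /=.
rewrite !mxE; ring.
Qed.

Lemma pairL1 (xi eta x : 'rV[F]_n) a : pair (a *: xi + eta) x = a * pair xi x + pair eta x.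
Proof.
rewrite /pair big_distrr -big_split; apply: eq_bigr => k _ /=.
rewrite !mxE; ring.
Qed.

Lemma coadLx a x y xi : coad br (a *: x + y) xi = a *: coad br x xi + coad br y xi.
Proof.
apply/rowP => j; rewrite /coad /dualmap !mxE brL1 pairL2; ring.
Qed.

Lemma coadLxi a x xi eta : coad br x (a *: xi + eta) = a *: coad br x xi + coad br x eta.
Proof.
apply/rowP => j; rewrite /coad /dualmap !mxE pairL1; ring.
Qed.

Lemma DmL a u u' v : Dm (a *: u + u') v = a *: Dm u v + Dm u' v.
Proof.
rewrite /Dm /rplus mulmxDl -scalemxAl brL1 coadLx coadLxi.
set A := br _ _; set B := br _ _.
set X1 := coad br (u *m r) v; set X2 := coad br (u' *m r) v.
set Y1 := coad br (v *m r) u; set Y2 := coad br (v *m r) u'.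
clearbody A B X1 X2 Y1 Y2.
rewrite !(mulmxBl, mulmxDl) -!scalemxAl.
set P1 := X1 *m r; set P2 := X2 *m r; set Q1 := Y1 *m r; set Q2 := Y2 *m r.
clearbody P1 P2 Q1 Q2.
apply/rowP => k; rewrite !mxE; ring.
Qed.

Lemma DmS u v : Dm u v = - Dm v u.
Proof.
rewrite /Dm /rplus (brS (v *m r)).
set A := br _ _.
set X1 := coad br (u *m r) v; set Y1 := coad br (v *m r) u.
clearbody X1 Y1.
rewrite !mulmxBl.
set P1 := X1 *m r; set Q1 := Y1 *m r.
clearbody A P1 Q1.
apply/rowP => k; rewrite !mxE; ring.
Qed.
End M.

Theorem proposition6p6 (F : closedFieldType) (n : nat)
  (charF0 : [pchar F] =i pred0)
  (br : 'rV[F]_n -> 'rV[F]_n -> 'rV[F]_n) (E : 'M[F]_n) (r : 'M[F]_n) :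
  is_ENL br E -> skew_tensor r ->
  (is_ENE_RB br E (dualmap (linop E)) (coad br) (rplus r)
   <-> is_EN_rmatrix br E r).
Proof.
move=> [Hl _] Hr.
have T2 : (forall u, linop E (rplus r u) = rplus r (dualmap (linop E) u)) <->
          tmap id (linop E) r - tmap (linop E) id r = 0.
  rewrite tmap1E tmap2E; split.
    move=> H; apply/eqP; rewrite subr_eq0; apply/eqP; apply: mx_ext => u.
    by have := H u; rewrite /linop /rplus dualE !mulmxA.
  move/eqP; rewrite subr_eq0 => /eqP H u.
  by rewrite /linop /rplus dualE -!mulmxA H.
split.
- move=> [H1 H2]; split; last by apply/T2.
  move=> i j k; rewrite -(@Dei _ _ br r Hl Hr).
  have -> : Dm F n br r (ebas F i) (ebas F j) = 0 by rewrite /Dm H1 subrr.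
  by rewrite mxE.
- move=> [H1 H2]; split; last by apply/T2.
  move=> u v.
  suff : Dm F n br r u v = 0 by move/eqP; rewrite subr_eq0 => /eqP.
  apply/rowP => c; rewrite (@BE _ _ (Dm F n br r) (@DmL _ _ br r Hl) (@DmS _ _ br r Hl)) mxE.
  rewrite big1 // => a _; rewrite big1 // => b _.
  by rewrite (@Dei _ _ br r Hl Hr) H1 mulr0.
Qed.
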